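(* Let $(x_n)\in\ell_1$ and let $I$ be a maximal ideal on $\mathbb{N}$. If $A(x_n)$ is nonmeager in $\mathbb{R}$, then $A_I(x_n)$ is nonmeager. If $\lambda^{*}(A(x_n))>0$ and $A_I(x_n)$ is Lebesgue measurable, then $\lambda^{*}(A_I(x_n))>0$, where $\lambda^{*}$ is Lebesgue outer measure.
   Context: An ideal on $\mathbb{N}$ is a family $I\subseteq P(\mathbb{N})$ closed under finite unions and subsets with $\mathbb{N}\notin I$; it is maximal if for every $A\subseteq\mathbb{N}$ either $A\in I$ or $\mathbb{N}\setminus A\in I$. $A(x_n)=\{\sum_{n\in A}x_n : A\subseteq\mathbb{N}\}$, $A_I(x_n)=\{\sum_{n\in A}x_n : A\in I\}$. *)

(* Defs.v *)
From Stdlib Require Import Reals Classical ClassicalEpsilon.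
Open Scope R_scope.

Definition ell1 (x : nat -> R) : Prop :=
  exists l, infinite_sum (fun n => Rabs (x n)) l.

Definition is_subsum (x : nat -> R) (A : nat -> Prop) (s : R) : Prop :=
  exists y : nat -> R,
    (forall n, (A n -> y n = x n) /\ (~ A n -> y n = 0)) /\
    infinite_sum y s.

Definition achievement (x : nat -> R) : R -> Prop :=
  fun s => exists A : nat -> Prop, is_subsum x A s.

Definition achievement_I (x : nat -> R) (I : (nat -> Prop) -> Prop) : R -> Prop :=
  fun s => exists A : nat -> Prop, I A /\ is_subsum x A s.

Definition is_ideal (I : (nat -> Prop) -> Prop) : Prop :=
  (forall A B, I A -> I B -> I (fun n => A n \/ B n)) /\
  (forall A B, I B -> (forall n, A n -> B n) -> I A) /\
  ~ I (fun _ => True).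

Definition maximal_ideal (I : (nat -> Prop) -> Prop) : Prop :=
  is_ideal I /\ forall A : nat -> Prop, I A \/ I (fun n => ~ A n).

Definition closureR (S : R -> Prop) : R -> Prop :=
  fun x => forall eps, 0 < eps -> exists y, S y /\ Rabs (x - y) < eps.

Definition nowhere_dense (S : R -> Prop) : Prop :=
  ~ exists x eps, 0 < eps /\
      forall y, Rabs (y - x) < eps -> closureR S y.

Definition meager (S : R -> Prop) : Prop :=
  exists N : nat -> R -> Prop,
    (forall k, nowhere_dense (N k)) /\
    (forall x, S x -> exists k, N k x).

Inductive Rbar : Type := Finite (r : R) | p_infty.

Definition Rbar_plus (a b : Rbar) : Rbar :=
  match a, b with
  | Finite r, Finite s => Finite (r + s)
  | _, _ => p_infty
  end.

Definition Rbar_lt (a b : Rbar) : Prop :=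
  match a, b with
  | Finite r, Finite s => r < s
  | Finite _, p_infty => True
  | p_infty, _ => False
  end.

Definition cover_lengths (S : R -> Prop) : R -> Prop :=
  fun L => exists a b : nat -> R,
    (forall k, a k <= b k) /\
    (forall x, S x -> exists k, a k < x < b k) /\
    infinite_sum (fun k => b k - a k) L.

Definition is_glb (E : R -> Prop) (m : R) : Prop :=
  (forall x, E x -> m <= x) /\
  (forall m', (forall x, E x -> m' <= x) -> m' <= m).

Definition lebesgue_outer (S : R -> Prop) : Rbar :=
  match excluded_middle_informative (exists L, cover_lengths S L) with
  | left _ => Finite (epsilon (inhabits 0) (is_glb (cover_lengths S)))
  | right _ => p_infty
  end.

Definition lebesgue_measurable (S : R -> Prop) : Prop :=
  forall T : R -> Prop,
    lebesgue_outer T =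
    Rbar_plus (lebesgue_outer (fun x => T x /\ S x))
              (lebesgue_outer (fun x => T x /\ ~ S x)).

(* Main.v *)
Require Import Defs.
From Stdlib Require Import Reals Classical ClassicalEpsilon Lia Lra.
Open Scope R_scope.

Lemma psum_double (l : nat -> R) (k : nat) :
  sum_f_R0 (fun n => l (Nat.div2 n)) (S (2*k)%nat) = 2 * sum_f_R0 l k.
Proof.
  induction k as [|k IH].
  - simpl. ring.
  - replace (S (2 * S k)) with (S (S (S (2*k)%nat))) by lia.
    change (sum_f_R0 (fun n => l (Nat.div2 n)) (S (S (S (2*k)%nat)))) with
     (sum_f_R0 (fun n => l (Nat.div2 n)) (S (2*k)%nat) + l (Nat.div2 (S (S (2*k)%nat)))
       + l (Nat.div2 (S (S (S (2*k)%nat))))).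
    rewrite IH.
    replace (Nat.div2 (S (S (2*k)%nat))) with (S k) by (symmetry; change (S (Nat.div2 (2*k)%nat) = S k); rewrite Nat.div2_double; reflexivity).
    replace (Nat.div2 (S (S (S (2*k)%nat)))) with (S k) by (symmetry; change (S (Nat.div2 (S (2*k)%nat)) = S k); rewrite Nat.div2_succ_double; reflexivity).
    simpl. ring.
Qed.

Lemma sum_double (l : nat -> R) (L : R) :
  infinite_sum l L -> infinite_sum (fun n => l (Nat.div2 n)) (2*L).
Proof.
  intros H eps Heps.
  destruct (H (eps/2)) as [N HN]; [lra|].
  exists (S (S (2*N))). intros n Hn.
  destruct (Nat.Even_or_Odd n) as [[k ->]|[k ->]].
  - destruct k as [|k]; [lia|].
    replace (2 * S k)%nat with (S (S (2*k)%nat)) by lia.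
    change (sum_f_R0 (fun n => l (Nat.div2 n)) (S (S (2*k)%nat))) with
      (sum_f_R0 (fun n => l (Nat.div2 n)) (S (2*k)%nat) + l (Nat.div2 (S (S (2*k)%nat)))).
    rewrite psum_double.
    replace (Nat.div2 (S (S (2*k)%nat))) with (S k) by (symmetry; change (S (Nat.div2 (2*k)%nat) = S k); rewrite Nat.div2_double; reflexivity).
    assert (H1 := HN k ltac:(lia)). assert (H2 := HN (S k) ltac:(lia)).
    simpl (sum_f_R0 l (S k)) in H2.
    unfold Rdist in *.
    replace (2 * sum_f_R0 l k + l (S k) - 2 * L) with
      ((sum_f_R0 l k - L) + (sum_f_R0 l k + l (S k) - L)) by ring.
    eapply Rle_lt_trans; [apply Rabs_triang|]. lra.
  - replace (2*k+1)%nat with (S (2*k)%nat) by lia. rewrite psum_double.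
    assert (H1 := HN k ltac:(lia)). unfold Rdist in *.
    replace (2 * sum_f_R0 l k - 2 * L) with (2 * (sum_f_R0 l k - L)) by ring.
    rewrite Rabs_mult, Rabs_right by lra. lra.
Qed.

Lemma sum_nonneg (f : nat -> R) L : (forall n, 0 <= f n) -> infinite_sum f L -> 0 <= L.
Proof.
  intros Hf H. destruct (Rle_or_lt 0 L) as [|HL]; [assumption|].
  destruct (H (-L)) as [N HN]; [lra|].
  specialize (HN N (le_n _)). unfold Rdist in HN.
  assert (0 <= sum_f_R0 f N) by (apply cond_pos_sum; exact Hf).
  apply Rabs_def2 in HN. lra.
Qed.

Lemma cover_nonneg S L : cover_lengths S L -> 0 <= L.
Proof.
  intros [a [b [Hab [_ Hs]]]]. eapply sum_nonneg; [|exact Hs].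
  intro n; specialize (Hab n); lra.
Qed.

Lemma glb_exists S : (exists L, cover_lengths S L) -> exists m, is_glb (cover_lengths S) m.
Proof.
  intros [L0 HL0].
  destruct (completeness (fun y => cover_lengths S (-y))) as [M [HM1 HM2]].
  - exists 0. intros y Hy. apply cover_nonneg in Hy. lra.
  - exists (-L0). rewrite Ropp_involutive. exact HL0.
  - exists (-M). split.
    + intros L HL. assert (-L <= M); [|lra]. apply HM1.
      rewrite Ropp_involutive; exact HL.
    + intros m' Hm'. assert (M <= -m'); [|lra]. apply HM2.
      intros y Hy. apply Hm' in Hy. lra.
Qed.

Lemma outer_fin S m : lebesgue_outer S = Finite m -> is_glb (cover_lengths S) m.
Proof.
  unfold lebesgue_outer.
  destruct (excluded_middle_informative _) as [e|e]; intro H; [|discriminate].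
  injection H as <-. apply epsilon_spec. apply glb_exists; exact e.
Qed.

Lemma outer_inf S : lebesgue_outer S = p_infty -> ~ exists L, cover_lengths S L.
Proof.
  unfold lebesgue_outer.
  destruct (excluded_middle_informative _) as [e|e]; intro H; [discriminate|exact e].
Qed.

Lemma small_covers S : ~ Rbar_lt (Finite 0) (lebesgue_outer S) ->
  forall eps, 0 < eps -> exists L, cover_lengths S L /\ L < eps.
Proof.
  intros H eps Heps.
  destruct (lebesgue_outer S) eqn:E; [|simpl in H; tauto].
  apply outer_fin in E. simpl in H.
  apply NNPP; intro C. assert (eps <= r); [|lra].
  apply (proj2 E). intros L HL. destruct (Rle_or_lt eps L); [assumption|].
  exfalso; apply C; eauto.
Qed.

Lemma not_pos S : (forall eps, 0 < eps -> exists L, cover_lengths S L /\ L < eps) ->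
  ~ Rbar_lt (Finite 0) (lebesgue_outer S).
Proof.
  intros H. destruct (lebesgue_outer S) eqn:E.
  - apply outer_fin in E. simpl. intro Hr.
    destruct (H r Hr) as [L [HL HLr]]. apply (proj1 E) in HL. lra.
  - apply outer_inf in E. exfalso. destruct (H 1 Rlt_0_1) as [L [HL _]]. eauto.
Qed.

Lemma cover_combine S T (sg : R) L :
  (forall t, T t -> S t \/ S (sg - t)) -> cover_lengths S L -> cover_lengths T (2*L).
Proof.
  intros HT [a [b [Hab [Hc Hs]]]].
  exists (fun n => if Nat.even n then a (Nat.div2 n) else sg - b (Nat.div2 n)).
  exists (fun n => if Nat.even n then b (Nat.div2 n) else sg - a (Nat.div2 n)).
  split; [|split].
  - intro n. destruct (Nat.even n); specialize (Hab (Nat.div2 n)); lra.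
  - intros t Ht. destruct (HT t Ht) as [H|H].
    + destruct (Hc _ H) as [k Hk]. exists (2*k)%nat.
      rewrite Nat.even_even, Nat.div2_double. exact Hk.
    + destruct (Hc _ H) as [k Hk]. exists (2*k+1)%nat.
      rewrite Nat.even_odd, Nat.div2_odd'. lra.
  - apply (sum_double (fun k => b k - a k)) in Hs.
    intros eps Heps. destruct (Hs eps Heps) as [N HN]. exists N. intros n Hn.
    specialize (HN n Hn). unfold Rdist in *.
    replace (sum_f_R0 _ n) with (sum_f_R0 (fun n => b (Nat.div2 n) - a (Nat.div2 n)) n);
      [exact HN|].
    apply sum_eq. intros i _. destruct (Nat.even i); ring.
Qed.

Lemma total_sum x : ell1 x -> exists sg, infinite_sum x sg.
Proof.
  intros [l Hl].
  destruct (cv_cauchy_2 x) as [sg Hsg].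
  - apply cauchy_abs. apply cv_cauchy_1. exists l. exact Hl.
  - exists sg. exact Hsg.
Qed.

Lemma compl_sum x sg A s : infinite_sum x sg -> is_subsum x A s ->
  is_subsum x (fun n => ~ A n) (sg - s).
Proof.
  intros Hx [y [Hy Hs]]. exists (fun n => x n - y n). split.
  - intro n. destruct (Hy n) as [H1 H2]. split.
    + intro Hn. rewrite H2 by exact Hn. ring.
    + intro Hn. apply NNPP in Hn. rewrite H1 by exact Hn. ring.
  - intros eps Heps. destruct (CV_minus _ _ _ _ Hx Hs eps Heps) as [N HN].
    exists N. intros n Hn. rewrite minus_sum. exact (HN n Hn).
Qed.

Lemma key x I : ell1 x -> maximal_ideal I -> exists sg, forall t,
  achievement x t -> achievement_I x I t \/ achievement_I x I (sg - t).
Proof.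
  intros Hx [_ HI]. destruct (total_sum x Hx) as [sg Hsg]. exists sg.
  intros t [A HA]. destruct (HI A) as [H|H].
  - left. exists A. auto.
  - right. exists (fun n => ~ A n). split; [exact H|]. apply compl_sum; assumption.
Qed.

Lemma nd_reflect (N : R -> Prop) sg : nowhere_dense N -> nowhere_dense (fun y => N (sg - y)).
Proof.
  intros H [x0 [eps [Heps Hi]]]. unfold nowhere_dense in H. apply H. exists (sg - x0). exists eps. split; [exact Heps|].
  intros z Hz e He. assert (Hz' : Rabs (sg - z - x0) < eps).
  { replace (sg - z - x0) with (- (z - (sg - x0))) by ring. rewrite Rabs_Ropp. exact Hz. }
  destruct (Hi (sg - z) Hz' e He) as [w [Hw Hwe]].
  exists (sg - w). split; [exact Hw|].
    replace (z - (sg - w)) with (- (sg - z - w)) by ring. rewrite Rabs_Ropp. exact Hwe.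
Qed.

Theorem mainTheorem16 (x : nat -> R) (I : (nat -> Prop) -> Prop) :
  ell1 x -> maximal_ideal I ->
  (~ meager (achievement x) -> ~ meager (achievement_I x I)) /\
  (Rbar_lt (Finite 0) (lebesgue_outer (achievement x)) ->
   lebesgue_measurable (achievement_I x I) ->
   Rbar_lt (Finite 0) (lebesgue_outer (achievement_I x I))).
Proof.
  intros Hx HI. destruct (key x I Hx HI) as [sg Hk]. split.
  - intros HA [N [Hn Hc]]. apply HA.
    exists (fun n => if Nat.even n then N (Nat.div2 n) else (fun y => N (Nat.div2 n) (sg - y))).
    split.
    + intro n. destruct (Nat.even n); [apply Hn|apply nd_reflect, Hn].
    + intros t Ht. destruct (Hk t Ht) as [H|H]; destruct (Hc _ H) as [k Hk'].
      * exists (2*k)%nat. rewrite Nat.even_even, Nat.div2_double. exact Hk'.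
      * exists (2*k+1)%nat. rewrite Nat.even_odd, Nat.div2_odd'. exact Hk'.
  - intros HA _. apply NNPP. intro C. revert HA. apply not_pos.
    intros eps Heps. destruct (small_covers _ C (eps/2)) as [L [HL HLe]]; [lra|].
    exists (2*L). split; [|lra]. eapply cover_combine; [|exact HL]. exact Hk.
Qed.
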